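(* Let $\mathcal{T}$ be a K3 category and $E\in\mathcal{T}$ a spherical object. Define objects $E_n$ inductively by $E_1:=E$ and, given $E_n$, letting $E_{n+1}$ be defined by a distinguished triangle $E_{n+1}\to E\to E_n[2]\to E_{n+1}[1]$ whose middle map is a nonzero morphism $E\to E_n[2]$. Then $\mathrm{Hom}(E,E_n[2])$ is one-dimensional for every $n\ge1$ (so the construction is well defined up to isomorphism), and for all positive integers $m\le n$ one has $(E_m,E_n)^i=1$ if $i\in\{-n+1,\dots,-n+m\}$, $(E_m,E_n)^i=1$ if $i\in\{2,\dots,m+1\}$, and $(E_m,E_n)^i=0$ otherwise.
   Context: All categories are linear over a field $k$ of characteristic $\neq 2$ and of finite type. A K3 category is such a triangulated category in which $E\mapsto E[2]$ is a Serre functor ($\mathrm{Hom}(E,F)\cong\mathrm{Hom}(F,E[2])^*$ functorially). Write $(E,F)^i=\dim_k\mathrm{Hom}(E,F[i])$. An object $E$ is spherical if $(E,E)^0=(E,E)^2=1$ and $(E,E)^i=0$ for $i\neq0,2$. *)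

(* Defs.v *)
(* an axiomatic k-linear triangulated category with Serre
   functor [2] ("K3 category"), with Mor spaces finite-dimensional k-vector
   spaces (vectType k). *)
From HB Require Import structures.
From mathcomp Require Import all_boot all_order all_algebra.
Set Implicit Arguments. Unset Strict Implicit. Unset Printing Implicit Defensive.
Import GRing.Theory.
Local Open Scope ring_scope.

Record K3Cat (k : fieldType) := {
  Obj :> Type;
  Mor : Obj -> Obj -> vectType k;
  comp : forall X Y Z : Obj, Mor Y Z -> Mor X Y -> Mor X Z;
  idm : forall X : Obj, Mor X X;
  comp_linl : forall X Y Z (g g' : Mor Y Z) (f : Mor X Y) (a : k),
      comp (a *: g + g') f = a *: comp g f + comp g' f;
  comp_linr : forall X Y Z (g : Mor Y Z) (f f' : Mor X Y) (a : k),
      comp g (a *: f + f') = a *: comp g f + comp g f';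
  compA : forall X Y Z W (h : Mor Z W) (g : Mor Y Z) (f : Mor X Y),
      comp h (comp g f) = comp (comp h g) f;
  comp1m : forall X Y (f : Mor X Y), comp (idm Y) f = f;
  compm1 : forall X Y (f : Mor X Y), comp f (idm X) = f;
  zobj : Obj;
  zobj_from : forall X, \dim (fullv : {vspace Mor zobj X}) = 0%N;
  zobj_to : forall X, \dim (fullv : {vspace Mor X zobj}) = 0%N;
  bip : Obj -> Obj -> Obj;
  bip_i1 : forall X Y, Mor X (bip X Y);
  bip_i2 : forall X Y, Mor Y (bip X Y);
  bip_p1 : forall X Y, Mor (bip X Y) X;
  bip_p2 : forall X Y, Mor (bip X Y) Y;
  bip_11 : forall X Y, comp (bip_p1 X Y) (bip_i1 X Y) = idm X;
  bip_22 : forall X Y, comp (bip_p2 X Y) (bip_i2 X Y) = idm Y;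
  bip_12 : forall X Y, comp (bip_p1 X Y) (bip_i2 X Y) = 0;
  bip_21 : forall X Y, comp (bip_p2 X Y) (bip_i1 X Y) = 0;
  bip_id : forall X Y, comp (bip_i1 X Y) (bip_p1 X Y)
                       + comp (bip_i2 X Y) (bip_p2 X Y) = idm (bip X Y);
  sh : Obj -> Obj;
  shm : forall X Y, Mor X Y -> Mor (sh X) (sh Y);
  shm_lin : forall X Y (f f' : Mor X Y) (a : k), shm (a *: f + f') = a *: shm f + shm f';
  shm_comp : forall X Y Z (g : Mor Y Z) (f : Mor X Y), shm (comp g f) = comp (shm g) (shm f);
  shm_id : forall X, shm (idm X) = idm (sh X);
  shm_inj : forall X Y, injective (@shm X Y);
  shm_surj : forall X Y (g : Mor (sh X) (sh Y)), exists f, shm f = g;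
  sh_esurj : forall Y, exists X (u : Mor (sh X) Y) (v : Mor Y (sh X)),
      comp u v = idm Y /\ comp v u = idm (sh X);
  dist : forall X Y Z, Mor X Y -> Mor Y Z -> Mor Z (sh X) -> Prop;
  dist_iso : forall X Y Z X' Y' Z' (f : Mor X Y) (g : Mor Y Z) (h : Mor Z (sh X))
      (f' : Mor X' Y') (g' : Mor Y' Z') (h' : Mor Z' (sh X'))
      (u : Mor X X') (u' : Mor X' X) (v : Mor Y Y') (v' : Mor Y' Y)
      (w : Mor Z Z') (w' : Mor Z' Z),
      comp u' u = idm X -> comp u u' = idm X' ->
      comp v' v = idm Y -> comp v v' = idm Y' ->
      comp w' w = idm Z -> comp w w' = idm Z' ->
      comp f' u = comp v f -> comp g' v = comp w g -> comp h' w = comp (shm u) h ->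
      dist f g h -> dist f' g' h';
  dist_id : forall X, dist (idm X) (0 : Mor X zobj) (0 : Mor zobj (sh X));
  dist_cone : forall X Y (f : Mor X Y),
      exists Z (g : Mor Y Z) (h : Mor Z (sh X)), dist f g h;
  dist_rot : forall X Y Z (f : Mor X Y) (g : Mor Y Z) (h : Mor Z (sh X)),
      dist f g h <-> dist g h (- shm f);
  dist_mor : forall X Y Z X' Y' Z' (f : Mor X Y) (g : Mor Y Z) (h : Mor Z (sh X))
      (f' : Mor X' Y') (g' : Mor Y' Z') (h' : Mor Z' (sh X'))
      (u : Mor X X') (v : Mor Y Y'),
      dist f g h -> dist f' g' h' -> comp v f = comp f' u ->
      exists w : Mor Z Z', comp w g = comp g' v /\ comp h' w = comp (shm u) h;
  dist_oct : forall X Y Z Z' X' Y' (f : Mor X Y) (g : Mor Y Z)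
      (u : Mor Y Z') (u' : Mor Z' (sh X))
      (v : Mor Z X') (v' : Mor X' (sh Y))
      (w : Mor Z Y') (w' : Mor Y' (sh X)),
      dist f u u' -> dist g v v' -> dist (comp g f) w w' ->
      exists (a : Mor Z' Y') (b : Mor Y' X'),
        [/\ dist a b (comp (shm u) v'),
            comp a u = comp w g, comp w' a = u',
            comp b w = v & comp v' b = comp (shm f) w'];
  (* Serre duality with Serre functor [2]: natural isomorphisms
     Hom(E,F) ~= Hom(F,E[2])^* *)
  serre : forall E F, 'Hom(Mor E F, 'Hom(Mor F (sh (sh E)), k^o));
  serre_inj : forall E F, lker (serre E F) = 0%VS;
  serre_surj : forall E F, limg (serre E F) = fullv;
  serre_nat : forall E E' F F' (f : Mor E' E) (g : Mor F F') (u : Mor E F)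
      (v : Mor F' (sh (sh E'))),
      serre E' F' (comp g (comp u f)) v
      = serre E F u (comp (shm (shm f)) (comp v g))
}.

Arguments Mor {k} _ _ _.
Arguments comp {k _ X Y Z} _ _.
Arguments sh {k _} _.
Arguments dist {k _ X Y Z} _ _ _.

Definition shn {k : fieldType} {T : K3Cat k} (n : nat) (X : T) : T := iter n sh X.

(* (E,F)^i = dim Hom(E, F[i]); for negative i = -(n+1) this is
   dim Hom(E[n+1], F) (canonically isomorphic to Hom(E,F[-n-1])). *)
Definition ext {k : fieldType} {T : K3Cat k} (i : int) (E F : T) : nat :=
  match i with
  | Posz n => \dim (fullv : {vspace Mor T E (shn n F)})
  | Negz n => \dim (fullv : {vspace Mor T (shn n.+1 E) F})
  end.

Definition finite_type {k : fieldType} (T : K3Cat k) : Prop :=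
  forall E F : T, exists N : nat, forall i : int, (N < `|i|)%N -> ext i E F = 0%N.

Definition spherical {k : fieldType} {T : K3Cat k} (E : T) : Prop :=
  ext 0 E E = 1%N /\ ext 2 E E = 1%N /\
  forall i : int, i != 0 -> i != 2 -> ext i E E = 0%N.

(* Main.v *)
Require Import Defs.
From HB Require Import structures.
From mathcomp Require Import all_boot all_order all_algebra zify.
Import GRing.Theory Num.Theory.
Local Open Scope ring_scope.
Set Implicit Arguments. Unset Strict Implicit.

Ltac split_ifs := repeat match goal with |- context[if ?c then _ else _] => let H := fresh "H" in destruct c eqn:H end.

Section S.
Variables (k : fieldType) (T : K3Cat k).
Implicit Types (X Y Z W : T).

Definition pc W Y Z (g : Mor T Y Z) : Mor T W Y -> Mor T W Z :=
  fun f => Defs.comp g f.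
Fact pc_lin W Y Z (g : Mor T Y Z) : linear (@pc W Y Z g).
Proof. by move=> a x y; rewrite /pc Defs.comp_linr. Qed.
HB.instance Definition _ W Y Z g := GRing.isLinear.Build k (Mor T W Y) (Mor T W Z) *:%R (@pc W Y Z g) (@pc_lin W Y Z g).
Definition PC W Y Z (g : Mor T Y Z) : 'Hom(Mor T W Y, Mor T W Z) := linfun (@pc W Y Z g).
Lemma PCE W Y Z (g : Mor T Y Z) x : PC W g x = Defs.comp g x.
Proof. by rewrite /PC lfunE. Qed.

Definition qc X Y Z (f : Mor T X Y) : Mor T Y Z -> Mor T X Z :=
  fun g => Defs.comp g f.
Fact qc_lin X Y Z (f : Mor T X Y) : linear (@qc X Y Z f).
Proof. by move=> a x y; rewrite /qc Defs.comp_linl. Qed.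
HB.instance Definition _ X Y Z f := GRing.isLinear.Build k (Mor T Y Z) (Mor T X Z) *:%R (@qc X Y Z f) (@qc_lin X Y Z f).

Definition shf X Y : Mor T X Y -> Mor T (sh X) (sh Y) := @shm k T X Y.
Fact shf_lin X Y : linear (@shf X Y).
Proof. by move=> a x y; rewrite /shf shm_lin. Qed.
HB.instance Definition _ X Y := GRing.isLinear.Build k (Mor T X Y) (Mor T (sh X) (sh Y)) *:%R (@shf X Y) (@shf_lin X Y).

Lemma comp0r X Y Z (g : Mor T Y Z) : Defs.comp g (0 : Mor T X Y) = 0.
Proof. exact: (linear0 (@pc X Y Z g)). Qed.
Lemma comp0l X Y Z (f : Mor T X Y) : Defs.comp (0 : Mor T Y Z) f = 0.
Proof. exact: (linear0 (@qc X Y Z f)). Qed.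
Lemma compNr X Y Z (g : Mor T Y Z) (f : Mor T X Y) : Defs.comp g (- f) = - Defs.comp g f.
Proof. exact: (linearN (@pc X Y Z g)). Qed.
Lemma compNl X Y Z (g : Mor T Y Z) (f : Mor T X Y) : Defs.comp (- g) f = - Defs.comp g f.
Proof. exact: (linearN (@qc X Y Z f)). Qed.
Lemma shm0 X Y : shm (0 : Mor T X Y) = 0.
Proof. exact: (linear0 (@shf X Y)). Qed.
Lemma shmN X Y (f : Mor T X Y) : shm (- f) = - shm f.
Proof. exact: (linearN (@shf X Y)). Qed.

Lemma gf0 X Y Z (f : Mor T X Y) g (h : Mor T Z (sh X)) : dist f g h -> Defs.comp g f = 0.
Proof.
move=> D.
have [w [H1 _]] := @dist_mor _ _ _ _ _ _ _ _ _ _ _ _ _ _ (idm X) f (dist_id X) D (erefl _).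
by rewrite -H1 comp0r.
Qed.

Lemma exact_mid X Y Z (f : Mor T X Y) g (h : Mor T Z (sh X)) W :
  dist f g h -> lker (PC W g) = limg (PC W f).
Proof.
move=> D; apply/eqP; rewrite eqEsubv; apply/andP; split; apply/subvP=> x.
- rewrite memv_ker PCE => /eqP gx.
  have D1 : dist (0 : Mor T W (zobj T)) (0 : Mor T (zobj T) (sh W)) (- shm (idm W)).
    exact: (proj1 (dist_rot _ _ _) (dist_id W)).
  have D2 : dist g h (- shm f) := proj1 (dist_rot _ _ _) D.
  have e : Defs.comp (0 : Mor T (zobj T) Z) (0 : Mor T W (zobj T)) = Defs.comp g x.
    by rewrite comp0l gx.
  have [w [_ H2]] := @dist_mor _ _ _ _ _ _ _ _ _ _ _ _ _ _ x 0 D1 D2 e.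
  have [y Hy] := shm_surj w.
  rewrite shm_id compNr compm1 compNl -Hy -shm_comp in H2.
  move/oppr_inj/shm_inj: H2 => H2.
  by apply/memv_imgP; exists y; rewrite ?memvf // PCE.
- case/memv_imgP=> y _ ->; rewrite memv_ker !PCE Defs.compA (gf0 D) comp0l //.
Qed.

Lemma rank_nullity (U V : vectType k) (f : 'Hom(U, V)) :
  (\dim (lker f) + \dim (limg f))%N = \dim (fullv : {vspace U}).
Proof. by rewrite -(limg_ker_dim f fullv) capfv. Qed.

Lemma five X Y Z (f : Mor T X Y) g (h : Mor T Z (sh X)) W : dist f g h ->
  (\dim (fullv : {vspace Mor T W (sh X)}) + \dim (limg (PC W g)) =
   \dim (fullv : {vspace Mor T W Z}) + \dim (lker (PC W (- shm g))))%N.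
Proof.
move=> D.
have D1 : dist g h (- shm f) := proj1 (dist_rot _ _ _) D.
have D2 : dist h (- shm f) (- shm g) := proj1 (dist_rot _ _ _) D1.
have D3 : dist (- shm f) (- shm g) (- shm h) := proj1 (dist_rot _ _ _) D2.
have E1 := exact_mid W D1. have E2 := exact_mid W D2. have E3 := exact_mid W D3.
have R1 := rank_nullity (PC W h). have R2 := rank_nullity (PC W (- shm f)).
rewrite E1 in R1. rewrite E2 in R2. rewrite E3. lia.
Qed.

Lemma dim_img_src (U V : vectType k) (f : 'Hom(U, V)) :
  (\dim (limg f) <= \dim (fullv : {vspace U}))%N.
Proof. rewrite -(rank_nullity f); lia. Qed.
Lemma dim_img_tgt (U V : vectType k) (f : 'Hom(U, V)) :
  (\dim (limg f) <= \dim (fullv : {vspace V}))%N.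
Proof. exact/dimvS/subvf. Qed.

Lemma dim_sh X Y : \dim (fullv : {vspace Mor T (sh X) (sh Y)}) = \dim (fullv : {vspace Mor T X Y}).
Proof.
pose F := linfun (@shf X Y).
have Hi : limg F = fullv.
  apply/eqP; rewrite eqEsubv subvf /=; apply/subvP => g _.
  have [f <-] := shm_surj g; apply/memv_imgP; exists f; first exact: memvf.
  by rewrite /F lfunE.
have Hk : lker F = 0%VS.
  apply/eqP/lker0P => x y; rewrite /F !lfunE; exact: shm_inj.
by rewrite -(rank_nullity F) Hi Hk dimv0.
Qed.

Lemma dim_shn p X Y : \dim (fullv : {vspace Mor T (shn p X) (shn p Y)}) = \dim (fullv : {vspace Mor T X Y}).
Proof. elim: p => [//|p IH]; by rewrite /= dim_sh. Qed.

Lemma dim_ext p q X Y : \dim (fullv : {vspace Mor T (shn p X) (shn q Y)}) = ext (q%:Z - p%:Z) X Y.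
Proof.
case: (leqP p q) => H.
- have -> : q = (p + (q - p))%N by lia.
  rewrite /shn iterD -/(shn p _) -/(shn _ Y) dim_shn.
  have -> : ((p + (q - p))%N%:Z - p%:Z) = Posz (q - p) by lia.
  by [].
- have -> : p = (q + (p - q))%N by lia.
  rewrite /shn iterD -/(shn q _) -/(shn _ X) dim_shn.
  have -> : (q%:Z - (q + (p - q))%N%:Z) = Negz (p - q).-1 by rewrite NegzE; lia.
  by rewrite /ext prednK //; lia.
Qed.

Lemma dim_serre X Y : \dim (fullv : {vspace Mor T X Y}) = \dim (fullv : {vspace Mor T Y (sh (sh X))}).
Proof.
rewrite -(rank_nullity (serre X Y)) serre_inj serre_surj dimv0 add0n.
by rewrite !dimvf /dim /= muln1.
Qed.

Lemma int_pq (i : int) : exists p q : nat, i = q%:Z - p%:Z.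
Proof. case: i => n; [exists 0%N, n | exists n.+1, 0%N]; rewrite ?NegzE; lia. Qed.
Lemma int_pq1 (i : int) : exists p q : nat, i = q.+1%:Z - p%:Z.
Proof. case: i => [[|n]|n]; [exists 1%N, 0%N | exists 0%N, n | exists n.+2, 0%N]; rewrite ?NegzE; lia. Qed.

Lemma ext_serre (i : int) X Y : ext i X Y = ext (2 - i) Y X.
Proof.
have [p [q ->]] := int_pq i.
rewrite -dim_ext dim_serre.
have -> : sh (sh (shn p X)) = shn p.+2 X by [].
rewrite dim_ext; congr ext; lia.
Qed.

Lemma ext_sh2 (i : int) X Y : ext i X (shn 2 Y) = ext (i + 2) X Y.
Proof.
have [p [q ->]] := int_pq i.
rewrite -dim_ext.
have -> : shn q (shn 2 Y) = shn (q + 2) Y by rewrite /shn iterD.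
rewrite dim_ext; congr ext; lia.
Qed.

Lemma tri_shift X Y Z (f : Mor T X Y) g (h : Mor T Z (sh X)) q : dist f g h ->
  exists f' g' h', @dist k T (shn q X) (shn q Y) (shn q Z) f' g' h'.
Proof.
move=> D; elim: q => [|q [f' [g' [h' D']]]]; first by exists f, g, h.
have D1 := proj1 (dist_rot _ _ _) D'.
have D2 := proj1 (dist_rot _ _ _) D1.
have D3 := proj1 (dist_rot _ _ _) D2.
by exists (- shm f'), (- shm g'), (- shm h').
Qed.

Lemma les_ext X Y Z (f : Mor T X Y) g (h : Mor T Z (sh X)) A (i : int) : dist f g h ->
  (ext (i - 1) A Y = 0%N \/ ext (i - 1) A Z = 0%N) ->
  (ext i A Y = 0%N \/ ext i A Z = 0%N) ->
  ext i A X = (ext (i - 1) A Z + ext i A Y)%N.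
Proof.
move=> D H1 H2.
have [p [q Ei]] := int_pq1 i.
have [f' [g' [h' D']]] := tri_shift q D.
have F := five (shn p A) D'.
have d3 : \dim (fullv : {vspace Mor T (shn p A) (sh (shn q X))}) = ext i A X.
  by rewrite Ei (dim_ext p q.+1 A X).
have d2 : \dim (fullv : {vspace Mor T (shn p A) (shn q Z)}) = ext (i - 1) A Z.
  by rewrite dim_ext; congr ext; lia.
have d1 : \dim (fullv : {vspace Mor T (shn p A) (shn q Y)}) = ext (i - 1) A Y.
  by rewrite dim_ext; congr ext; lia.
have d4 : \dim (fullv : {vspace Mor T (shn p A) (sh (shn q Y))}) = ext i A Y.
  by rewrite Ei (dim_ext p q.+1 A Y).
have d5 : \dim (fullv : {vspace Mor T (shn p A) (sh (shn q Z))}) = ext i A Z.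
  by rewrite Ei (dim_ext p q.+1 A Z).
have B1 := dim_img_src (PC (shn p A) g').
have B2 := dim_img_tgt (PC (shn p A) g').
have B3 := dim_img_tgt (PC (shn p A) (- shm g')).
have R := rank_nullity (PC (shn p A) (- shm g')).
rewrite d3 d2 in F. rewrite d1 in B1. rewrite d2 in B2. rewrite d5 in B3. rewrite d4 in R.
lia.
Qed.



Lemma img_ge1 (U V : vectType k) (F : 'Hom(U, V)) u : F u != 0 -> (1 <= \dim (limg F))%N.
Proof.
move=> Hu; have : (<[F u]> <= limg F)%VS by rewrite -memvE memv_img ?memvf.
by move/dimvS; rewrite dim_vline Hu.
Qed.

Lemma sphE (E : T) (i : int) : spherical E -> ext i E E = (if (i == 0) || (i == 2) then 1%N else 0%N).
Proof.
case=> [H0 [H2 Ho]]; case: (eqVneq i 0) => [->//|n0]; case: (eqVneq i 2) => [->//|n2].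
by rewrite Ho.
Qed.

Lemma col1 (E : T) (En : nat -> T)
    (a : forall n : nat, Mor T (En n.+1) E)
    (b : forall n : nat, Mor T E (shn 2 (En n)))
    (c : forall n : nat, Mor T (shn 2 (En n)) (sh (En n.+1))) :
  spherical E -> En 1%N = E ->
  (forall n : nat, (0 < n)%N -> b n != 0 /\ dist (a n) (b n) (c n)) ->
  forall n, (0 < n)%N -> forall i : int,
    ext i E (En n) = (if (i == 1 - n%:Z) || (i == 2) then 1%N else 0%N).
Proof.
move=> Hs E1 H; elim=> // n IH _ i.
case: (posnP n) => [->|n0].
  rewrite E1 sphE //; split_ifs; lia.
have IHn := IH n0.
have [bn Dn] := H n n0.
case: (eqVneq i 0) => [->|i0].
  have F := five (sh E) Dn.
  have d3 : \dim (fullv : {vspace Mor T (sh E) (sh (En n.+1))}) = ext 0 E (En n.+1) := dim_ext 1 1 E (En n.+1).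
  have d2 : \dim (fullv : {vspace Mor T (sh E) (shn 2 (En n))}) = ext 1 E (En n) := dim_ext 1 2 E (En n).
  have d1 : \dim (fullv : {vspace Mor T (sh E) E}) = ext (-1) E E := dim_ext 1 0 E E.
  have d4 : \dim (fullv : {vspace Mor T (sh E) (sh E)}) = ext 0 E E := dim_ext 1 1 E E.
  have B1 := dim_img_src (PC (sh E) (b n)).
  have R := rank_nullity (PC (sh E) (- shm (b n))).
  have G : (1 <= \dim (limg (PC (sh E) (- shm (b n)))))%N.
    apply: (img_ge1 (u := idm (sh E))); rewrite PCE compm1 oppr_eq0.
    apply: contra bn => /eqP; rewrite -(shm0 E (shn 2 (En n))) => /shm_inj ->; by [].
  rewrite d3 d2 in F; rewrite d1 in B1; rewrite d4 in R.
  rewrite IHn sphE // in F B1 R. rewrite sphE // in R.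
  move: F B1 R G; split_ifs; lia.
case: (eqVneq i 1) => [->|i1].
  have F := five E Dn.
  have d3 : \dim (fullv : {vspace Mor T E (sh (En n.+1))}) = ext 1 E (En n.+1) := dim_ext 0 1 E (En n.+1).
  have d2 : \dim (fullv : {vspace Mor T E (shn 2 (En n))}) = ext 2 E (En n) := dim_ext 0 2 E (En n).
  have d4 : \dim (fullv : {vspace Mor T E (sh E)}) = ext 1 E E := dim_ext 0 1 E E.
  have R := rank_nullity (PC E (- shm (b n))).
  have G : (1 <= \dim (limg (PC E (b n))))%N.
    by apply: (img_ge1 (u := idm E)); rewrite PCE compm1.
  rewrite d3 d2 in F; rewrite d4 in R.
  rewrite IHn in F. rewrite sphE // in R.
  move: F R G; split_ifs; lia.
rewrite (les_ext (A:=E) (i:=i) Dn) ?ext_sh2 ?IHn ?sphE //; try by split_ifs; lia.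
all: split_ifs; lia.
Qed.

Lemma rowcol (E : T) (En : nat -> T)
    (a : forall n : nat, Mor T (En n.+1) E)
    (b : forall n : nat, Mor T E (shn 2 (En n)))
    (c : forall n : nat, Mor T (shn 2 (En n)) (sh (En n.+1))) :
  spherical E -> En 1%N = E ->
  (forall n : nat, (0 < n)%N -> b n != 0 /\ dist (a n) (b n) (c n)) ->
  forall n, (0 < n)%N -> forall m, (0 < m)%N -> (m <= n)%N -> forall j : int,
    ext j (En n) (En m) =
      (if ((1 - n%:Z <= 2 - j) && (2 - j <= m%:Z - n%:Z)) || ((2 <= 2 - j) && (2 - j <= m%:Z + 1))
       then 1%N else 0%N).
Proof.
move=> Hs E1 H n n0.
have C := col1 Hs E1 H n0.
have eA : forall j, ext j (En n) E = (if (2 - j == 1 - n%:Z) || (2 - j == 2) then 1%N else 0%N).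
  by move=> j; rewrite ext_serre C.
elim=> // m IH _ Hmn j.
case: (posnP m) => [->|m0].
  rewrite E1 eA; split_ifs; lia.
have IHm := IH m0 (ltnW Hmn).
have [bm Dm] := H m m0.
rewrite (les_ext (A:=En n) (i:=j) Dm) ?ext_sh2 ?IHm ?eA //; try by split_ifs; lia.
all: split_ifs; lia.
Qed.

End S.

Theorem lemma2p12 (k : fieldType) (T : K3Cat k) (E : T) (En : nat -> T)
    (a : forall n : nat, Mor T (En n.+1) E)
    (b : forall n : nat, Mor T E (shn 2 (En n)))
    (c : forall n : nat, Mor T (shn 2 (En n)) (sh (En n.+1))) :
  (2%:R : k) != 0 ->
  finite_type T ->
  spherical E ->
  En 1%N = E ->
  (forall n : nat, (0 < n)%N -> b n != 0 /\ dist (a n) (b n) (c n)) ->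
  (forall n : nat, (0 < n)%N -> \dim (fullv : {vspace Mor T E (shn 2 (En n))}) = 1%N) /\
  (forall (m n : nat) (i : int), (0 < m)%N -> (m <= n)%N ->
     ext i (En m) (En n) =
       (if ((1 - n%:Z <= i) && (i <= m%:Z - n%:Z)) || ((2 <= i) && (i <= m%:Z + 1))
        then 1%N else 0%N)).
Proof.
move=> _ _ Hs E1 H; split.
  move=> n n0; change (ext 2 E (En n) = 1%N).
  by rewrite (col1 Hs E1 H n0) eqxx orbT.
move=> m n i m0 Hmn.
have n0 : (0 < n)%N by apply: leq_trans Hmn.
rewrite ext_serre (rowcol Hs E1 H n0 m0 Hmn).
split_ifs; lia.
Qed.
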